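(* Let $A\in\mathbb{R}^{d\times d}$ and let $\mathbb{A}x=Ax$. Let $N\ge1$ and real coefficients $h_{k,j}$ ($1\le k\le N$, $0\le j\le k-1$) be given. Define \[ x_{k+1}=x_k-\sum_{j=0}^{k}h_{k+1,j}\,\mathbb{A}x_j,\qquad k=0,1,\dots,N-1, \] and its H-dual \[ \hat x_{k+1}=\hat x_k-\sum_{j=0}^{k}h_{N-j,N-k-1}\,\mathbb{A}\hat x_j,\qquad k=0,1,\dots,N-1. \] If $\hat x_0=x_0$, then $\hat x_N=x_N$. *)

(* Defs.v *)
From mathcomp Require Import all_boot all_order all_algebra.
From mathcomp Require Import reals.
Set Implicit Arguments. Unset Strict Implicit. Unset Printing Implicit Defensive.

(* Main.v *)
Require Import Defs.
From mathcomp Require Import all_boot all_order all_algebra.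
From mathcomp Require Import reals.
From mathcomp Require Import zify.
Import GRing.Theory Num.Theory.
Local Open Scope ring_scope.

Fixpoint Uf (R : realType) d (A : 'M[R]_d) (c : nat -> nat -> R) (k : nat)
  : nat -> 'M[R]_d :=
  match k with
  | 0 => fun _ => 1%:M
  | k'.+1 => fun i => if (i <= k')%N then Uf R d A c k' i
             else Uf R d A c k' k' - \sum_(j < k'.+1) c k' j *: (A *m Uf R d A c k' j)
  end.

Arguments Uf {R d} A c k.
Lemma Uf_stable (R : realType) d (A : 'M[R]_d) c k i :
  (i <= k)%N -> Uf A c k i = Uf A c i i.
Proof.
elim: k => [|k IH]; first by rewrite leqn0 => /eqP->.
move=> le /=; case: ifP => [/IH //|/negbT]; rewrite -ltnNge => lt.
have /eqP -> : i == k.+1 by rewrite eqn_leq le lt.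
by rewrite /= ltnn.
Qed.

Lemma U_rec (R : realType) d (A : 'M[R]_d) c k :
  Uf A c k.+1 k.+1 = Uf A c k k - \sum_(j < k.+1) c k j *: (A *m Uf A c j j).
Proof.
rewrite /= ltnn; congr (_ - _); apply: eq_bigr => j _.
by rewrite Uf_stable // -ltnS.
Qed.

Lemma U_comm (R : realType) d (A : 'M[R]_d) c k :
  A *m Uf A c k k = Uf A c k k *m A.
Proof.
elim/ltn_ind: k => [[|k]] IH; first by rewrite mulmx1 mul1mx.
rewrite U_rec mulmxBr mulmxBl IH // mulmx_sumr mulmx_suml; congr (_ - _).
apply: eq_bigr => j _; rewrite -scalemxAr -scalemxAl -!mulmxA -IH //.
Qed.

Lemma exch_tri (V : zmodType) N (F : nat -> nat -> V) :
  \sum_(0 <= i < N) \sum_(0 <= j < i.+1) F i j =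
  \sum_(0 <= j < N) \sum_(j <= i < N) F i j.
Proof.
elim: N => [|N IH]; first by rewrite !big_geq.
rewrite big_nat_recr //= IH [RHS]big_nat_recr //= big_nat1.
rewrite (@eq_big_nat _ _ _ 0 N (fun j => \sum_(j <= i < N.+1) F i j) (fun j => \sum_(j <= i < N) F i j + F N j)).
  by rewrite big_split /= [\sum_(0 <= j < N.+1) F N j]big_nat_recr //= addrA.
by move=> j /andP[_ lt]; rewrite big_nat_recr // ltnW.
Qed.

Lemma shift_nat (V : zmodType) j N (F : nat -> V) :
  \sum_(j <= i < N) F i = \sum_(0 <= i < N - j) F (i + j)%N.
Proof. by rewrite -{1}(add0n j) big_addn. Qed.

Theorem propositionI1 (R : realType) (d N : nat) (A : 'M[R]_d)
    (h : nat -> nat -> R) (x xh : nat -> 'cV[R]_d) :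
  (1 <= N)%N ->
  (forall k : nat, (k < N)%N ->
     x k.+1 = x k - \sum_(j < k.+1) h k.+1 j *: (A *m x j)) ->
  (forall k : nat, (k < N)%N ->
     xh k.+1 = xh k - \sum_(j < k.+1) h (N - j)%N (N - k.+1)%N *: (A *m xh j)) ->
  xh 0%N = x 0%N ->
  xh N = x N.
Proof.
move=> _ Hx Hxh H0.
pose c := fun k j : nat => h (N - j)%N (N - k.+1)%N.
pose U := fun k => Uf A c k k.
have Urec : forall k, U k.+1 = U k - \sum_(j < k.+1) c k j *: (A *m U j) := fun k => @U_rec _ _ A c k.
have Ucomm : forall k, A *m U k = U k *m A := fun k => @U_comm _ _ A c k.
have U0 : U 0%N = 1%:M by [].
have xhU : forall k, (k <= N)%N -> xh k = U k *m x 0%N.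
  elim/ltn_ind => [[|k]] IH le; first by rewrite H0 U0 mul1mx.
  rewrite Hxh // (IH k (ltnSn k) (ltnW le)) Urec mulmxBl; congr (_ - _).
  rewrite mulmx_suml; apply: eq_bigr => j _.
  rewrite IH; last by rewrite (leq_trans _ le) // ltnW.
    by rewrite -scalemxAl mulmxA.
  by rewrite (leq_ltn_trans _ (ltnSn k)) // -ltnS.
apply/eqP; rewrite eq_sym -subr_eq0; apply/eqP.
have -> : x N - xh N = \sum_(0 <= i < N) (U (N - i.+1)%N *m x i.+1 - U (N - i)%N *m x i).
  rewrite (telescope_sumr (fun i => U (N - i)%N *m x i)) // subnn subn0.
  by rewrite xhU // /U /= mul1mx.
have E : forall i, (0 <= i < N)%N -> U (N - i.+1)%N *m x i.+1 - U (N - i)%N *m x i =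
   U (N - i.+1)%N *m (x i.+1 - x i + \sum_(0 <= j < i.+1) h i.+1 j *: (A *m x j))
   - (U (N - i)%N - U (N - i.+1)%N) *m x i
   - \sum_(0 <= j < i.+1) h i.+1 j *: (U (N - i.+1)%N *m A *m x j).
  move=> i /andP[_ lt]; rewrite mulmxDr mulmxBr mulmxBl mulmx_sumr.
  rewrite (eq_bigr (fun j => h i.+1 j *: (U (N - i.+1)%N *m A *m x j))).
    by rewrite addrAC addrK opprB addrA subrK.
  by move=> j _; rewrite -scalemxAr mulmxA.
rewrite (eq_big_nat _ _ E) !sumrB.
rewrite big1_seq ?sub0r; last first.
  move=> i; rewrite mem_index_iota => /andP[_ lt].
  by rewrite Hx // big_mkord (addrAC (x i)) subrr add0r addNr mulmx0.
apply/eqP; rewrite -opprD oppr_eq0; apply/eqP.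
rewrite exch_tri -big_split big1_seq //= => j; rewrite mem_index_iota => /andP[_ lt].
rewrite (eq_bigr (fun i => (h i.+1 j *: (A *m U (N - i.+1)%N)) *m x j)); last first.
  by move=> i _; rewrite -scalemxAl Ucomm.
rewrite -mulmx_suml -mulmxDl.
suff Hs : \sum_(j <= i < N) h i.+1 j *: (A *m U (N - i.+1)%N) = U (N - j.+1)%N - U (N - j)%N.
  by rewrite Hs addrA subrK subrr mul0mx.
have eN : (N - j = (N - j.+1).+1)%N by lia.
rewrite shift_nat eN Urec opprB addrC subrK.
rewrite -(big_mkord xpredT (fun m => c (N - j.+1)%N m *: (A *m U m))) big_nat_rev; apply: eq_big_nat => m /andP[_ hm].
have e1 : ((0 + (N - j.+1).+1 - m.+1 + j).+1 = N - m)%N by lia.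
have e2 : (N - (N - m) = m)%N by lia.
have e3 : (N - (N - j.+1).+1 = j)%N by lia.
by rewrite /c e1 e2 e3.
Qed.
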